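(* Let $P,Q$ be convex polygons in the plane, with all vertices in general position, that form a weakly disjoint pair. Then their boundaries $\partial P$ and $\partial Q$ intersect in at most two points.
   Context: Two convex polygons $P,Q$ form a weakly disjoint pair if $P\setminus Q$ and $Q\setminus P$ are both connected sets and $P$ and $Q$ share no vertex. The convex hull of a line segment is regarded as a valid degenerate convex polygon with two edges. *)

(* Defs.v *)
From HB Require Import structures.
From mathcomp Require Import all_boot all_order all_algebra.
From mathcomp Require Import all_classical all_reals all_analysis.
Set Implicit Arguments. Unset Strict Implicit. Unset Printing Implicit Defensive.
Import Order.TTheory GRing.Theory Num.Theory.
Import numFieldNormedType.Exports.
Local Open Scope classical_set_scope.
Local Open Scope ring_scope.

Section Defs.
Variable R : realType.
Notation pt := (R * R)%type.

Definition polyhull (s : seq pt) : set pt :=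
  [set x | exists w : nat -> R,
     (forall i, 0 <= w i) /\ \sum_(i < size s) w i = 1 /\
     x.1 = \sum_(i < size s) w i * (nth (0, 0) s i).1 /\
     x.2 = \sum_(i < size s) w i * (nth (0, 0) s i).2].

(* a convex polygon given by its list of vertices: at least two distinct
   vertices, each vertex extreme (not in the hull of the others);
   two vertices = degenerate polygon (a segment) *)
Definition is_convex_polygon (s : seq pt) : Prop :=
  (2 <= size s)%N /\ uniq s /\ (forall v, v \in s -> ~ polyhull (rem v s) v).

Definition collinear (a b c : pt) : Prop :=
  (b.1 - a.1) * (c.2 - a.2) - (b.2 - a.2) * (c.1 - a.1) = 0.

Definition general_position (s : seq pt) : Prop :=
  forall a b c, a \in s -> b \in s -> c \in s ->
    a != b -> b != c -> a != c -> ~ collinear a b c.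

Definition weakly_disjoint (p q : seq pt) : Prop :=
  connected (polyhull p `\` polyhull q) /\ connected (polyhull q `\` polyhull p) /\
  (forall v, v \in p -> v \notin q).

Definition boundary (A : set pt) : set pt := closure A `\` interior A.
End Defs.

(* Main.v *)
Require Import Defs.
From HB Require Import structures.
From mathcomp Require Import all_boot all_order all_algebra.
From mathcomp Require Import all_classical all_reals all_analysis.
From mathcomp Require Import ring lra.
Set Implicit Arguments. Unset Strict Implicit. Unset Printing Implicit Defensive.
Import Order.TTheory GRing.Theory Num.Theory.
Import numFieldNormedType.Exports.
Local Open Scope classical_set_scope.
Local Open Scope ring_scope.

Section Geo.
Variable R : realType.
Notation pt := (R * R)%type.

Definition dot (n w : pt) : R := n.1 * w.1 + n.2 * w.2.
Definition cr (a b : pt) : R := a.1 * b.2 - a.2 * b.1.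
Lemma sum_delta (n k : nat) (F : nat -> R) : (k < n)%N ->
  \sum_(i < n) (((i : nat) == k)%:R * F i) = F k.
Proof.
move=> Hk; rewrite (bigD1 (Ordinal Hk)) //= eqxx mul1r big1 ?addr0 // => i Hi.
have -> : ((i : nat) == k) = false.
  by apply/negbTE; apply: contra Hi => /eqP h; apply/eqP; apply: val_inj.
by rewrite mul0r.
Qed.

Lemma hull_lin (s : seq pt) x n c : polyhull s x ->
  (forall v, v \in s -> dot n v <= c) -> dot n x <= c.
Proof.
move=> [w [w0 [ws [hx1 hx2]]]] hv.
have -> : dot n x = \sum_(i < size s) w i * dot n (nth (0, 0) s i).
  rewrite /dot hx1 hx2 !mulr_sumr -big_split /=; apply: eq_bigr => i _.
  rewrite /dot; ring.
apply: (@le_trans _ _ (\sum_(i < size s) w i * c)).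
  apply: ler_sum => i _; apply: ler_wpM2l => //; apply: hv; exact: mem_nth.
by rewrite -mulr_suml ws mul1r.
Qed.

Lemma hull_comb3 (s : seq pt) u v z a b c :
  u \in s -> v \in s -> z \in s -> 0 <= a -> 0 <= b -> 0 <= c -> a + b + c = 1 ->
  polyhull s (a * u.1 + b * v.1 + c * z.1, a * u.2 + b * v.2 + c * z.2).
Proof.
move=> hu hv hz ha hb hc habc.
pose W (i : nat) := a * (i == index u s)%:R + b * (i == index v s)%:R
   + c * (i == index z s)%:R.
have key : forall F : nat -> R, \sum_(i < size s) W i * F i =
   a * F (index u s) + b * F (index v s) + c * F (index z s).
  move=> F.
  have -> : \sum_(i < size s) W i * F i = a * \sum_(i < size s) (((i:nat) == index u s)%:R * F i)
     + b * \sum_(i < size s) (((i:nat) == index v s)%:R * F i)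
     + c * \sum_(i < size s) (((i:nat) == index z s)%:R * F i).
    rewrite !mulr_sumr -!big_split /=; apply: eq_bigr => i _; rewrite /W; ring.
  by rewrite !sum_delta // index_mem.
exists W; split; [|split; [|split]].
- by move=> i; rewrite /W !addr_ge0 // mulr_ge0 // ler0n.
- rewrite -habc; have := key (fun _ => 1); rewrite !mulr1 => <-; apply: eq_bigr => i _; by rewrite mulr1.
- by rewrite /= (key (fun i => (nth (0,0) s i).1)) /= !nth_index.
- by rewrite /= (key (fun i => (nth (0,0) s i).2)) /= !nth_index.
Qed.

Lemma hull_zero_comb (s : seq pt) y v1 v2 v3 al be ga :
  v1 \in s -> v2 \in s -> v3 \in s -> 0 <= al -> 0 <= be -> 0 <= ga ->
  0 < al + be + ga ->
  al * (v1.1 - y.1) + be * (v2.1 - y.1) + ga * (v3.1 - y.1) = 0 ->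
  al * (v1.2 - y.2) + be * (v2.2 - y.2) + ga * (v3.2 - y.2) = 0 ->
  polyhull s y.
Proof.
move=> h1 h2 h3 ha hb hc hS e1 e2.
set S := al + be + ga in hS.
have S0 : S != 0 by rewrite gt_eqF.
have := hull_comb3 h1 h2 h3 (divr_ge0 ha (ltW hS)) (divr_ge0 hb (ltW hS))
  (divr_ge0 hc (ltW hS)).
have -> : al / S + be / S + ga / S = 1 by rewrite /S; field.
move=> /(_ erefl); congr polyhull.
case: y e1 e2 => y1 y2 /= e1 e2; congr pair.
- apply/eqP; rewrite -subr_eq0; apply/eqP.
  have -> : al / S * v1.1 + be / S * v2.1 + ga / S * v3.1 - y1 =
    (al * (v1.1 - y1) + be * (v2.1 - y1) + ga * (v3.1 - y1)) / S by rewrite /S; field.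
  by rewrite e1 mul0r.
- apply/eqP; rewrite -subr_eq0; apply/eqP.
  have -> : al / S * v1.2 + be / S * v2.2 + ga / S * v3.2 - y2 =
    (al * (v1.2 - y2) + be * (v2.2 - y2) + ga * (v3.2 - y2)) / S by rewrite /S; field.
  by rewrite e2 mul0r.
Qed.

Lemma hull_conv (s : seq pt) x y t : polyhull s x -> polyhull s y -> 0 <= t <= 1 ->
  polyhull s ((1 - t) * x.1 + t * y.1, (1 - t) * x.2 + t * y.2).
Proof.
move=> [w [w0 [ws [hx1 hx2]]]] [w' [w0' [ws' [hy1 hy2]]]] /andP[t0 t1].
exists (fun i => (1 - t) * w i + t * w' i); split; [|split; [|split]].
- by move=> i; rewrite addr_ge0 // mulr_ge0 // subr_ge0.
- by rewrite big_split /= -!mulr_sumr ws ws' !mulr1 subrK.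
- rewrite /= hx1 hy1 !mulr_sumr -big_split /=; apply: eq_bigr => i _; ring.
- rewrite /= hx2 hy2 !mulr_sumr -big_split /=; apply: eq_bigr => i _; ring.
Qed.
Lemma dot_pos (d : pt) : d != (0, 0) -> 0 < dot d d.
Proof.
case: d => d1 d2 hd; rewrite /dot /= lt_def addr_ge0 ?sqr_ge0 // andbT.
apply: contra hd; rewrite paddr_eq0 ?sqr_ge0 // !mulf_eq0 !orbb => /andP[/eqP-> /eqP->].
by [].
Qed.

Lemma id_dec (d b w : pt) : dot d d * cr b w = dot d w * cr b d + cr d w * dot b d.
Proof. rewrite /dot /cr; ring. Qed.

Lemma id_tri (a b c d : pt) : cr a b * cr d c + cr b c * cr d a + cr c a * cr d b = 0.
Proof. rewrite /cr; ring. Qed.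

Lemma id_binet (e d n m : pt) : cr e d * cr n m = dot e n * dot d m - dot e m * dot d n.
Proof. rewrite /cr /dot; ring. Qed.

Lemma crNC (a b : pt) : cr b a = - cr a b.
Proof. rewrite /cr; ring. Qed.

Lemma cr_trans (d a b c : pt) : 0 < cr d a -> 0 < cr d b -> 0 < cr d c ->
  0 < cr a b -> 0 < cr b c -> 0 < cr a c.
Proof.
move=> da db dc ab bc; have := id_tri a b c d.
have := mulr_gt0 ab dc; have := mulr_gt0 bc da => h1 h2 e.
have h3 : cr c a * cr d b < 0 by lra.
by move: h3; rewrite pmulr_llt0 // crNC oppr_lt0.
Qed.

Lemma ext_max (d : pt) (L : seq pt) : L != [::] -> (forall w, w \in L -> 0 < cr d w) ->
  exists2 a, a \in L & forall w, w \in L -> cr a w <= 0.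
Proof.
elim: L => // x L IH _ hL.
case: (eqVneq L [::]) => [-> | LN].
  by exists x; rewrite ?mem_seq1 // => w; rewrite mem_seq1 => /eqP ->; rewrite /cr; lra.
have hL' : forall w, w \in L -> 0 < cr d w by move=> w h; apply: hL; rewrite in_cons h orbT.
have [a aL ha] := IH LN hL'.
case: (lerP (cr a x) 0) => hax.
  exists a; first by rewrite in_cons aL orbT.
  by move=> w; rewrite in_cons => /orP[/eqP ->|]; [|apply: ha].
exists x; first by rewrite in_cons eqxx.
move=> w; rewrite in_cons => /orP[/eqP ->|wL]; first by rewrite /cr; lra.
rewrite leNgt; apply/negP => hxw.
have := cr_trans (hL' a aL) (hL x (mem_head _ _)) (hL' w wL) hax hxw.
by rewrite ltNge ha.
Qed.

Definition mir (w : pt) : pt := (w.1, - w.2).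
Lemma cr_mir (a b : pt) : cr (mir a) (mir b) = - cr a b.
Proof. rewrite /cr /mir /=; ring. Qed.

Lemma ext_min (d : pt) (L : seq pt) : L != [::] -> (forall w, w \in L -> cr d w < 0) ->
  exists2 b, b \in L & forall w, w \in L -> 0 <= cr b w.
Proof.
move=> LN hL.
have H1 : map mir L != [::] by case: L LN {hL}.
have H2 : forall w, w \in map mir L -> 0 < cr (mir d) w.
  by move=> w /mapP[w' w'L ->]; rewrite cr_mir oppr_gt0 hL.
have [a aL ha] := ext_max H1 H2.
move: aL => /mapP[b bL ab]; exists b => // w wL.
by have := ha (mir w) (map_f _ wL); rewrite ab cr_mir oppr_le0.
Qed.

Lemma angular (W : seq pt) : W != [::] -> (forall w, w \in W -> w != (0, 0)) ->
  (exists n, forall w, w \in W -> dot n w < 0) \/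
  (exists w1 w2, [/\ w1 \in W, w2 \in W, cr w1 w2 = 0 & dot w1 w2 < 0]) \/
  (exists w1 w2 w3, [/\ w1 \in W, w2 \in W, w3 \in W &
     [/\ 0 < cr w1 w2, 0 < cr w2 w3 & 0 < cr w3 w1]]).
Proof.
case: W => // d W' _ hW0.
set W := d :: W'.
have dW : d \in W by rewrite mem_head.
have dd := dot_pos (hW0 d dW).
case: (pselect (exists w, w \in W /\ cr d w = 0 /\ dot d w < 0)) => [[w [wW [c0 dl]]]|Hn].
  by right; left; exists d, w; split.
have H0 : forall w, w \in W -> cr d w = 0 -> 0 < dot d w.
  move=> w wW c0; rewrite lt_def; apply/andP; split; last first.
    by rewrite leNgt; apply/negP => h; apply: Hn; exists w.
  apply/eqP => d0; move: (hW0 w wW); case: w wW c0 d0 => w1 w2 wW c0 d0.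
  have e1 : dot d d * w1 = 0.
    have -> : dot d d * w1 = dot d (w1, w2) * d.1 - cr d (w1, w2) * d.2 by rewrite /dot /cr /=; ring.
    by rewrite d0 c0; ring.
  have e2 : dot d d * w2 = 0.
    have -> : dot d d * w2 = dot d (w1, w2) * d.2 + cr d (w1, w2) * d.1 by rewrite /dot /cr /=; ring.
    by rewrite d0 c0; ring.
  move: e1 e2 => /eqP; rewrite mulf_eq0 gt_eqF //= => /eqP -> /eqP; rewrite mulf_eq0 gt_eqF //= => /eqP ->.
  by rewrite eqxx.
have Hpar : forall b w, w \in W -> cr d w = 0 -> cr b w = - (dot d w * cr d b) / dot d d.
  move=> b w wW c0.
  have e : dot d d * cr b w = - (dot d w * cr d b) by rewrite id_dec c0 crNC; ring.
  by rewrite -e (mulrC (dot d d)) mulfK // lt0r_neq0.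
set A := [seq w <- W | 0 < cr d w].
set B := [seq w <- W | cr d w < 0].
have Htri : forall w, w \in W -> [\/ w \in A, w \in B | cr d w = 0].
  move=> w wW; rewrite !mem_filter wW !andbT.
  by case: (ltgtP (cr d w) 0) => h; [apply: Or32|apply: Or31|apply: Or33].
have hAA : forall w, w \in A -> 0 < cr d w by move=> w; rewrite mem_filter => /andP[].
have hBB : forall w, w \in B -> cr d w < 0 by move=> w; rewrite mem_filter => /andP[].
case: (eqVneq A [::]) => [A0|AN]; case: (eqVneq B [::]) => [B0|BN].
- left; exists (- d.1, - d.2) => w wW.
  case: (Htri w wW); [by rewrite A0|by rewrite B0|] => c0.
  have := H0 w wW c0; rewrite /dot /=; lra.
- have [b bB hb] := ext_min BN hBB.
  have bW : b \in W by move: bB; rewrite mem_filter => /andP[].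
  have db : cr d b < 0 by move: bB; rewrite mem_filter => /andP[].
  left; exists (- (d.2 - b.2), d.1 - b.1) => w wW.
  have -> : dot (- (d.2 - b.2), d.1 - b.1) w = cr d w - cr b w by rewrite /dot /cr /=; ring.
  case: (Htri w wW); [by rewrite A0| |] => h.
  + have := hb w h; move: h; rewrite mem_filter => /andP[h _]; lra.
  + rewrite h (Hpar b w wW h).
    have := H0 w wW h => h1.
    have : 0 < dot d w * (- cr d b) / dot d d by rewrite divr_gt0 // mulr_gt0 // oppr_gt0.
    rewrite mulrN mulNr; lra.
- have [a aA ha] := ext_max AN hAA.
  have aW : a \in W by move: aA; rewrite mem_filter => /andP[].
  have da : 0 < cr d a by move: aA; rewrite mem_filter => /andP[].
  left; exists (- (a.2 - d.2), a.1 - d.1) => w wW.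
  have -> : dot (- (a.2 - d.2), a.1 - d.1) w = cr a w - cr d w by rewrite /dot /cr /=; ring.
  case: (Htri w wW); [|by rewrite B0|] => h.
  + have := ha w h; move: h; rewrite mem_filter => /andP[h _]; lra.
  + rewrite h (Hpar a w wW h).
    have := H0 w wW h => h1.
    have : 0 < dot d w * cr d a / dot d d by rewrite divr_gt0 // mulr_gt0.
    rewrite mulNr; lra.
- have [a aA ha] := ext_max AN hAA.
  have aW : a \in W by move: aA; rewrite mem_filter => /andP[].
  have da : 0 < cr d a by move: aA; rewrite mem_filter => /andP[].
  have [b bB hb] := ext_min BN hBB.
  have bW : b \in W by move: bB; rewrite mem_filter => /andP[].
  have db : cr d b < 0 by move: bB; rewrite mem_filter => /andP[].
  case: (ltgtP (cr a b) 0) => hab.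
  + left; exists (- (a.2 - b.2), a.1 - b.1) => w wW.
    have -> : dot (- (a.2 - b.2), a.1 - b.1) w = cr a w - cr b w by rewrite /dot /cr /=; ring.
    have T := id_tri a b w d.
    case: (Htri w wW) => h.
    * have haw := ha w h; move: h; rewrite mem_filter => /andP[h _].
      have t1 : cr a b * cr d w < 0 by nra.
      have t3 : cr w a * cr d b <= 0 by rewrite crNC; nra.
      have t2 : 0 < cr b w * cr d a by lra.
      move: t2; rewrite pmulr_lgt0 // => t2; lra.
    * have hbw := hb w h; move: h; rewrite mem_filter => /andP[h _].
      have t1 : 0 < cr a b * cr d w by nra.
      have t2 : 0 <= cr b w * cr d a by nra.
      have t3 : cr w a * cr d b < 0 by lra.
      rewrite crNC in t3; nra.
    * rewrite (Hpar a w wW h) (Hpar b w wW h).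
      have := H0 w wW h => h1.
      have : 0 < dot d w * cr d a / dot d d by rewrite divr_gt0 // mulr_gt0.
      have : 0 < dot d w * (- cr d b) / dot d d by rewrite divr_gt0 // mulr_gt0 // oppr_gt0.
      rewrite !mulNr !mulrN; lra.
  + right; right; exists d, a, b; split => //; split => //.
    by rewrite crNC oppr_gt0.
  + right; left; exists a, b; split => //.
    have I := id_dec a d b.
    rewrite hab mul0r addr0 in I.
    have aa : 0 < dot a a.
      apply: dot_pos; apply/eqP => a0; move: da; rewrite a0 /cr /=; lra.
    have : dot a a * cr d b < 0 by nra.
    rewrite I => h; nra.
Qed.
Lemma affine_pos (c0 a1 a2 : R) : 0 < c0 -> exists2 e : R, 0 < e &
  forall z1 z2, `|z1| < e -> `|z2| < e -> 0 < c0 + a1 * z1 + a2 * z2.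
Proof.
move=> c0p; set K := `|a1| + `|a2| + 1.
have Kp : 0 < K by rewrite /K ltr_wpDl // addr_ge0.
exists (c0 / K); first by rewrite divr_gt0.
move=> z1 z2 h1 h2.
have b1 : - (a1 * z1) <= `|a1| * (c0 / K).
  apply: (le_trans (ler_norm _)); rewrite normrN normrM.
  by apply: ler_wpM2l => //; apply: ltW.
have b2 : - (a2 * z2) <= `|a2| * (c0 / K).
  apply: (le_trans (ler_norm _)); rewrite normrN normrM.
  by apply: ler_wpM2l => //; apply: ltW.
have e : (`|a1| * (c0 / K) + `|a2| * (c0 / K)) = c0 - c0 / K.
  by rewrite /K; field; rewrite -/K gt_eqF.
have : 0 < c0 / K by rewrite divr_gt0.
lra.
Qed.

Definition nearx (x : pt) (P : pt -> Prop) := exists2 e : R, 0 < e &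
  forall y : pt, `|x.1 - y.1| < e -> `|x.2 - y.2| < e -> P y.

Lemma nearx_nbhs (x : pt) (A : set pt) : nearx x A -> nbhs x A.
Proof.
move=> [e e0 H]; apply/nbhs_ballP; exists e => //= y [/= h1 h2].
by apply: H; [move: h1 | move: h2]; rewrite /ball /=.
Qed.

Lemma nearx_and (x : pt) (P Q : pt -> Prop) : nearx x P -> nearx x Q ->
  nearx x (fun y => P y /\ Q y).
Proof.
move=> [e1 e10 H1] [e2 e20 H2]; exists (Num.min e1 e2); first by rewrite lt_min e10.
by move=> y h1 h2; move: h1 h2; rewrite !lt_min => /andP[a1 a2] /andP[b1 b2]; split;
  [apply: H1 | apply: H2].
Qed.

Lemma nearx_imp (x : pt) (P Q : pt -> Prop) : nearx x P -> (forall y, P y -> Q y) ->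
  nearx x Q.
Proof. by move=> [e e0 H] PQ; exists e => // y h1 h2; apply: PQ; apply: H. Qed.

Lemma nearx_aff (x : pt) (h : pt -> R) a1 a2 :
  (forall y, h y = h x + a1 * (y.1 - x.1) + a2 * (y.2 - x.2)) -> 0 < h x ->
  nearx x (fun y => 0 < h y).
Proof.
move=> hE hp; have [e e0 H] := affine_pos a1 a2 hp.
by exists e => // y h1 h2; rewrite hE; apply: H; rewrite distrC.
Qed.

Definition vsub (a b : pt) : pt := (a.1 - b.1, a.2 - b.2).

Lemma near_cr (x A B : pt) : 0 < cr (vsub A x) (vsub B x) ->
  nearx x (fun y => 0 < cr (vsub A y) (vsub B y)).
Proof.
move=> h; apply: (@nearx_aff x (fun y => cr (vsub A y) (vsub B y))
  (- (B.2 - A.2)) (B.1 - A.1)) => // y.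
rewrite /cr /vsub /=; ring.
Qed.

Lemma fin_gap (s : seq pt) (f : pt -> R) r : (forall v, v \in s -> f v < r) ->
  exists c, c < r /\ forall v, v \in s -> f v <= c.
Proof.
elim: s => [|x s IH] H.
  by exists (r - 1); split => //; lra.
have [c [cr' hc]] := IH (fun v vs => H v (mem_behead (s:=x::s) vs)).
exists (Num.max (f x) c); split.
  by rewrite gt_max cr' H // mem_head.
move=> v; rewrite in_cons => /orP[/eqP ->|vs]; first by rewrite le_max lexx.
by rewrite le_max hc ?orbT.
Qed.

Lemma hull_vert (s : seq pt) v : v \in s -> polyhull s v.
Proof.
move=> vs; have := hull_comb3 vs vs vs ler01 (lexx 0) (lexx 0).
rewrite !mul1r !mul0r !addr0 -surjective_pairing; apply; ring.
Qed.

Lemma combo_zero3 (w1 w2 w3 : pt) :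
  cr w2 w3 * w1.1 + cr w3 w1 * w2.1 + cr w1 w2 * w3.1 = 0 /\
  cr w2 w3 * w1.2 + cr w3 w1 * w2.2 + cr w1 w2 * w3.2 = 0.
Proof. by rewrite /cr; split; ring. Qed.

Lemma hull_tri (s : seq pt) y v1 v2 v3 : v1 \in s -> v2 \in s -> v3 \in s ->
  let al := cr (vsub v2 y) (vsub v3 y) in
  let be := cr (vsub v3 y) (vsub v1 y) in
  let ga := cr (vsub v1 y) (vsub v2 y) in
  (0 <= al /\ 0 <= be /\ 0 <= ga /\ 0 < al + be + ga) \/
  (al <= 0 /\ be <= 0 /\ ga <= 0 /\ al + be + ga < 0) ->
  polyhull s y.
Proof.
move=> h1 h2 h3 al be ga.
case => [[a0 [b0 [g0 S0]]] | [a0 [b0 [g0 S0]]]].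
  by apply: (hull_zero_comb h1 h2 h3 a0 b0 g0 S0); rewrite /al /be /ga /cr /vsub /=; ring.
apply: (hull_zero_comb h1 h2 h3 (al := - al) (be := - be) (ga := - ga)); try lra;
  by rewrite /al /be /ga /cr /vsub /=; ring.
Qed.
Lemma dotC (a b : pt) : dot a b = dot b a.
Proof. by rewrite /dot mulrC (mulrC a.2). Qed.

Lemma vsub_nz (v y : pt) : v != y -> vsub v y != (0, 0).
Proof.
case: v y => v1 v2 [y1 y2] hv; apply/negP => /eqP [] /eqP; rewrite subr_eq0 => /eqP e1 /eqP.
by rewrite subr_eq0 => /eqP e2; move: hv; rewrite e1 e2 eqxx.
Qed.

Lemma sep (s : seq pt) y : s != [::] -> ~ polyhull s y ->
  exists n c, (forall v, v \in s -> dot n v <= c) /\ c < dot n y.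
Proof.
move=> sN Py.
have WN : map (fun v => vsub v y) s != [::] by case: s sN {Py}.
set W := map (fun v => vsub v y) s in WN *.
have Wnz : forall w, w \in W -> w != (0, 0).
  move=> w /mapP[v vs ->]; apply: vsub_nz; apply/negP => /eqP e.
  by apply: Py; rewrite -e; apply: hull_vert.
case: (angular WN Wnz) => [[n Hn]|[[w1 [w2 [h1 h2 c0 d0]]]|[w1 [w2 [w3 [h1 h2 h3 [c1 c2 c3]]]]]]].
- have [c [cl hc]] := @fin_gap s (fun v => dot n v) (dot n y)
    (fun v vs => ltac:(have := Hn _ (map_f (fun v => vsub v y) vs); rewrite /dot /vsub /=; lra)).
  by exists n, c.
- exfalso; apply: Py.
  move: h1 h2 => /mapP[v1 v1s e1] /mapP[v2 v2s e2].
  have w1nz := Wnz _ (map_f (fun v => vsub v y) v1s); rewrite -e1 in w1nz.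
  have dp := dot_pos w1nz.
  apply: (@hull_zero_comb s y v1 v2 v2 (- dot w1 w2) (dot w1 w1) 0) => //.
  + by rewrite oppr_ge0 ltW.
  + exact: ltW.
  + rewrite addr0; lra.
  + have -> : - dot w1 w2 * (v1.1 - y.1) + dot w1 w1 * (v2.1 - y.1) + 0 * (v2.1 - y.1)
        = - cr w1 w2 * w1.2 by rewrite e1 e2 /dot /cr /vsub /=; ring.
    by rewrite c0; ring.
  + have -> : - dot w1 w2 * (v1.2 - y.2) + dot w1 w1 * (v2.2 - y.2) + 0 * (v2.2 - y.2)
        = cr w1 w2 * w1.1 by rewrite e1 e2 /dot /cr /vsub /=; ring.
    by rewrite c0; ring.
- exfalso; apply: Py.
  move: h1 h2 h3 => /mapP[v1 v1s e1] /mapP[v2 v2s e2] /mapP[v3 v3s e3].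
  apply: (hull_tri v1s v2s v3s); left; rewrite -e1 -e2 -e3.
  by split; [lra|split; [lra|split; lra]].
Qed.

Lemma closed_hull (s : seq pt) : s != [::] -> closed (polyhull s).
Proof.
move=> sN; rewrite -openC openE => y /= Py.
have [n [c [hv hc]]] := sep sN Py.
apply: nearx_nbhs.
have hp : 0 < dot n y - c by lra.
apply: (nearx_imp (@nearx_aff y (fun z => dot n z - c) n.1 n.2 _ hp)).
  by move=> z; rewrite /dot; ring.
by move=> z Hz Pz; have := hull_lin Pz hv; lra.
Qed.
Lemma support (s : seq pt) x u0 v0 : u0 \in s -> v0 \in s -> u0 != v0 ->
  polyhull s x -> ~ nbhs x (polyhull s) ->
  exists n, n != (0, 0) /\ forall w, w \in s -> dot n w <= dot n x.
Proof.
move=> us vs uv Px Nint; apply: contrapT => Hnot; apply: Nint.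
have H : forall n, n != (0, 0) -> exists2 v, v \in s & dot n x < dot n v.
  move=> n n0; apply: contrapT => hn; apply: Hnot; exists n; split => // w ws.
  by rewrite leNgt; apply/negP => h; apply: hn; exists w.
set F := [seq v <- s | v != x].
have memW : forall w, w \in map (fun v => vsub v x) F ->
    exists2 v, v \in s & (v != x) /\ w = vsub v x.
  by move=> w /mapP[v]; rewrite mem_filter => /andP[vx vs'] ->; exists v.
have WN : map (fun v => vsub v x) F != [::].
  case: (eqVneq u0 x) => [ux|ux].
    have vF : v0 \in F by rewrite mem_filter vs -ux eq_sym uv.
    by case: (F) vF.
  have uF : u0 \in F by rewrite mem_filter us ux.
  by case: (F) uF.
have inW : forall v, v \in s -> v != x -> vsub v x \in map (fun v => vsub v x) F.
  by move=> v' v's v'x; apply: map_f; rewrite mem_filter v's v'x.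
have Wnz : forall w, w \in map (fun v => vsub v x) F -> w != (0, 0).
  by move=> w /memW[v' _ [v'x ->]]; apply: vsub_nz.
apply: nearx_nbhs.
case: (angular WN Wnz) => [[n Hn]|[[w1 [w2 [h1 h2 c0 d0]]]|[w1 [w2 [w3 [h1 h2 h3 [c1 c2 c3]]]]]]].
- exfalso.
  have n0 : n != (0, 0).
    apply/negP => /eqP n0; move: WN; case E: (map _ F) => [//|w0 W'] _.
    by have := Hn w0; rewrite E mem_head n0 /dot /= !mul0r addr0 ltxx => /(_ erefl).
  have [v' v's hv'] := H n n0.
  have v'x : v' != x by apply/negP => /eqP e; move: hv'; rewrite e ltxx.
  have := Hn _ (inW v' v's v'x); rewrite /dot /vsub /= in hv' *; lra.
- move: h1 h2 => /memW[v1 v1s [v1x e1]] /memW[v2 v2s [v2x e2]].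
  have w1nz : w1 != (0, 0) by rewrite e1 vsub_nz.
  have dp := dot_pos w1nz.
  have n1 : (- w1.2, w1.1) != (0, 0).
    apply: contra w1nz; case: (w1) => a b /eqP [] /eqP; rewrite oppr_eq0 => /eqP -> ->.
    by [].
  have n2 : (w1.2, - w1.1) != (0, 0).
    apply: contra w1nz; case: (w1) => a b /eqP [] -> /eqP; rewrite oppr_eq0 => /eqP ->.
    by [].
  have [v3 v3s h3] := H _ n1.
  have [v4 v4s h4] := H _ n2.
  have c3 : 0 < cr w1 (vsub v3 x) by move: h3; rewrite /dot /cr /vsub /=; lra.
  have c4 : cr w1 (vsub v4 x) < 0 by move: h4; rewrite /dot /cr /vsub /=; lra.
  have I3 := id_dec w1 w2 (vsub v3 x).
  have I4 := id_dec w1 w2 (vsub v4 x).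
  rewrite (crNC w1 w2) c0 oppr0 mulr0 add0r (dotC w2) in I3 I4.
  have s3 : cr w2 (vsub v3 x) < 0 by nra.
  have s4 : 0 < cr w2 (vsub v4 x) by nra.
  rewrite e1 e2 in s3 s4 c3 c4.
  have N1 := near_cr (A := v3) (B := v2) (x := x) ltac:(rewrite crNC; lra).
  have N2 := near_cr (A := v1) (B := v3) (x := x) c3.
  have N3 := near_cr (A := v2) (B := v4) (x := x) s4.
  have N4 := near_cr (A := v4) (B := v1) (x := x) ltac:(rewrite crNC; lra).
  apply: (nearx_imp (nearx_and (nearx_and N1 N2) (nearx_and N3 N4))).
  move=> y [[a1 a2] [a3 a4]].
  case: (lerP (cr (vsub v1 y) (vsub v2 y)) 0) => g.
  + apply: (hull_tri v1s v2s v3s); right.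
    rewrite (crNC (vsub v3 y) (vsub v2 y)) (crNC (vsub v1 y) (vsub v3 y)); lra.
  + apply: (hull_tri v1s v2s v4s); left.
    lra.
- move: h1 h2 h3 => /memW[v1 v1s [_ e1]] /memW[v2 v2s [_ e2]] /memW[v3 v3s [_ e3]].
  rewrite e1 e2 e3 in c1 c2 c3.
  have N1 := near_cr c1; have N2 := near_cr c2; have N3 := near_cr c3.
  apply: (nearx_imp (nearx_and N1 (nearx_and N2 N3))).
  move=> y [a1 [a2 a3]].
  by apply: (hull_tri v1s v2s v3s); left; lra.
Qed.
Lemma line_col (n a b c : pt) : n != (0, 0) -> dot n a = dot n b -> dot n a = dot n c ->
  collinear a b c.
Proof.
move=> n0 hab hac; rewrite /collinear.
have dn := dot_pos n0.
set D := (b.1 - a.1) * (c.2 - a.2) - (b.2 - a.2) * (c.1 - a.1).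
have e : dot n n * D = 0.
  have -> : dot n n * D = (n.1 * (c.2 - a.2) - n.2 * (c.1 - a.1)) * (dot n b - dot n a)
     - (n.1 * (b.2 - a.2) - n.2 * (b.1 - a.1)) * (dot n c - dot n a).
    by rewrite /D /dot; ring.
  by rewrite -hab -hac !subrr !mulr0 subrr.
by move/eqP: e; rewrite mulf_eq0 gt_eqF //= => /eqP.
Qed.

Definition gpos (s : seq pt) := forall a b c, a \in s -> b \in s -> c \in s ->
    a != b -> b != c -> a != c -> ~ collinear a b c.

Lemma face (s : seq pt) x n : uniq s -> gpos s -> n != (0, 0) -> polyhull s x ->
  (forall v, v \in s -> dot n v <= dot n x) ->
  x \in s \/ exists u v l, [/\ u \in s, v \in s, u != v, dot n u = dot n x &
     dot n v = dot n x] /\ (0 < l < 1 /\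
       x = ((1 - l) * u.1 + l * v.1, (1 - l) * u.2 + l * v.2)).
Proof.
move=> us gp n0 [w [w0 [ws [hx1 hx2]]]] hv.
set N := size s in ws hx1 hx2.
set f := fun i : nat => nth (0, 0) s i.
have fs : forall i : 'I_N, f i \in s by move=> i; apply: mem_nth.
have finj : forall i j : 'I_N, (f i == f j) = (i == j).
  by move=> i j; rewrite /f nth_uniq.
have hd : dot n x = \sum_(i < N) w i * dot n (f i).
  rewrite /dot hx1 hx2 !mulr_sumr -big_split /=; apply: eq_bigr => i _.
  rewrite /dot; ring.
have z : forall i : 'I_N, w i * (dot n x - dot n (f i)) = 0.
  move=> i; apply: (@psumr_eq0P _ _ predT (fun i : 'I_N => w i * (dot n x - dot n (f i)))) => //.
    by move=> j _; rewrite mulr_ge0 // subr_ge0 hv.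
  have -> : \sum_(j < N) w j * (dot n x - dot n (f j)) =
      dot n x * \sum_(j < N) w j - \sum_(j < N) w j * dot n (f j).
    by rewrite mulr_sumr -sumrB; apply: eq_bigr => j _; ring.
  by rewrite ws mulr1 -hd subrr.
have onl : forall i : 'I_N, w i != 0 -> dot n (f i) = dot n x.
  move=> i wi; have := z i; move/eqP; rewrite mulf_eq0 (negbTE wi) /= subr_eq0 => /eqP.
  by move=> ->.
have [i0 wi0] : exists i : 'I_N, w i != 0.
  apply: contrapT => hn; move: ws; rewrite big1 => [e|i _].
    by move: (@oner_neq0 R); rewrite -e eqxx.
  by apply: contrapT => h; apply: hn; exists i; apply/eqP.
have hw0 : forall i : 'I_N, w i != 0 -> 0 < w i by move=> i h; rewrite lt_def h w0.
case: (pselect (exists j : 'I_N, j != i0 /\ w j != 0)) => [[j [ji wj]]|Hno].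
- right.
  have other : forall k : 'I_N, k != i0 -> k != j -> w k = 0.
    move=> k ki kj; apply/eqP; apply: contrapT => wk.
    have wk' : w k != 0 by apply/negP.
    apply: (gp (f i0) (f j) (f k)); rewrite ?fs ?finj 1?eq_sym //.
    apply: line_col n0 _ _.
      by rewrite (onl _ wi0) (onl _ wj).
    by rewrite (onl _ wi0) (onl _ wk').
  have sum2 : forall F : nat -> R, \sum_(i < N) w i * F i = w i0 * F i0 + w j * F j.
    move=> F; rewrite (bigD1 i0) //= (bigD1 j) //= big1 ?addr0 //.
    by move=> k /andP[kj ki]; rewrite other ?mul0r.
  have e1 : w i0 + w j = 1.
    have := sum2 (fun _ => 1); rewrite !mulr1 => <-; rewrite -[RHS]ws; apply: eq_bigr => i _; exact: mulr1.
  exists (f i0), (f j), (w j); split; first by split; rewrite ?fs ?finj 1?eq_sym ?onl.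
  split.
    by have := hw0 _ wi0; have := hw0 _ wj; move=> ha hb; apply/andP; split; lra.
  rewrite [x]surjective_pairing hx1 hx2 (sum2 (fun i => (nth (0,0) s i).1))
     (sum2 (fun i => (nth (0,0) s i).2)).
  have -> : 1 - w j = w i0 by lra.
  by [].
- left.
  have other : forall k : 'I_N, k != i0 -> w k = 0.
    move=> k ki; apply/eqP; apply: contrapT => wk; apply: Hno; exists k; split => //.
    by apply/negP.
  have sum1 : forall F : nat -> R, \sum_(i < N) w i * F i = w i0 * F i0.
    move=> F; rewrite (bigD1 i0) //= big1 ?addr0 // => k ki.
    by rewrite other ?mul0r.
  have e1 : w i0 = 1.
    have := sum1 (fun _ => 1); rewrite !mulr1 => <-; rewrite -[RHS]ws; apply: eq_bigr => i _; exact: mulr1.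
  have -> : x = f i0.
    rewrite [x]surjective_pairing hx1 hx2 (sum1 (fun i => (nth (0,0) s i).1))
      (sum1 (fun i => (nth (0,0) s i).2)) e1 !mul1r.
    by rewrite /f -surjective_pairing.
  exact: fs.
Qed.
Lemma conn_split (A : set pt) (h : pt -> R) a1 a2 p1 p2 :
  (forall y z, h z = h y + a1 * (z.1 - y.1) + a2 * (z.2 - y.2)) ->
  connected A -> (forall y, A y -> h y != 0) -> A p1 -> A p2 -> 0 < h p1 -> h p2 < 0 ->
  False.
Proof.
move=> hE cA hnz A1 A2 h1 h2.
have oC : open [set y | 0 < h y].
  rewrite openE => y /= hy; apply: nearx_nbhs.
  exact: (@nearx_aff y h a1 a2 (hE y) hy).
have cC : closed [set y | 0 <= h y].
  rewrite -openC openE => y /= hy; apply: nearx_nbhs.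
  have hy' : 0 < - h y by rewrite oppr_gt0 ltNge; apply/negP.
  apply: (nearx_imp (@nearx_aff y (fun z => - h z) (- a1) (- a2) _ hy')).
    by move=> z; rewrite (hE y z); ring.
  by move=> z /= hz hz'; lra.
have := cA (A `&` [set y | 0 < h y]).
have ne : A `&` [set y | 0 < h y] !=set0 by exists p1.
move=> /(_ ne (ex_intro2 _ _ _ oC erefl)).
have e : A `&` [set y | 0 < h y] = A `&` [set y | 0 <= h y].
  apply/seteqP; split => y [Ay hy]; split => //=; first by apply: ltW.
  by rewrite lt_def hnz.
move=> /(_ (ex_intro2 _ _ _ cC e)) E.
have : (A `&` [set y | 0 < h y]) p2 by rewrite E.
by move=> [_ /=]; lra.
Qed.

Lemma perp2 (n m e : pt) : e != (0, 0) -> dot n e = 0 -> dot m e = 0 -> cr n m = 0.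
Proof.
move=> e0 h1 h2; have de := dot_pos e0.
have E : dot e e * cr n m = e.1 * (m.2 * dot n e - n.2 * dot m e)
  + e.2 * (- m.1 * dot n e + n.1 * dot m e) by rewrite /dot /cr; ring.
have : dot e e * cr n m = 0 by rewrite E h1 h2; ring.
by move/eqP; rewrite mulf_eq0 gt_eqF //= => /eqP.
Qed.

Lemma par_zero (n m z : pt) : m != (0, 0) -> cr n m = 0 -> dot m z = 0 -> dot n z = 0.
Proof.
move=> m0 c0 d0; have dm := dot_pos m0.
have E : dot m m * dot n z = dot m n * dot m z - cr n m * cr m z by rewrite /dot /cr; ring.
have : dot m m * dot n z = 0 by rewrite E c0 d0; ring.
by move/eqP; rewrite mulf_eq0 gt_eqF //= => /eqP.
Qed.

Definition edata (s : seq pt) (a n u v : pt) (l : R) :=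
  [/\ n != (0, 0), u \in s, v \in s, u != v & (forall w, w \in s -> dot n w <= dot n a)] /\
  [/\ dot n u = dot n a, dot n v = dot n a, 0 < l < 1 &
      a = ((1 - l) * u.1 + l * v.1, (1 - l) * u.2 + l * v.2)].

Lemma near_point (s t : seq pt) a n u v l m e : edata s a n u v l ->
  (forall w, w \in t -> dot m w <= dot m a) -> cr n m != 0 -> dot n e < 0 ->
  exists z, [/\ polyhull s z, ~ polyhull t z & cr e (vsub z a) * cr n m < 0].
Proof.
move=> [[n0 us vs uv hs] [hu hv /andP[l0 l1] ha]] hm c0 de.
set d := vsub v u.
have dn : dot n d = 0.
  have -> : dot n d = dot n v - dot n u by rewrite /dot /d /vsub /=; ring.
  by rewrite hu hv subrr.
have d0 : d != (0, 0) by apply: vsub_nz; rewrite eq_sym.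
have k0 : dot m d != 0.
  apply/eqP => k0; apply/negP: c0; apply/negPn/eqP; exact: perp2 d0 dn k0.
have [mu [mu0 [mu1 hk]]] : exists mu, 0 <= mu /\ mu <= 1 /\ 0 < (mu - l) * dot m d.
  case: (ltgtP (dot m d) 0) => hk; last by move: k0; rewrite hk eqxx.
    by exists (l / 2); split; [|split]; try lra; nra.
  by exists ((1 + l) / 2); split; [|split]; try lra; nra.
set z := ((1 - mu) * u.1 + mu * v.1, (1 - mu) * u.2 + mu * v.2).
have zE : vsub z a = ((mu - l) * d.1, (mu - l) * d.2).
  by rewrite /z ha /vsub /d /=; congr pair; ring.
exists z; split.
- have := hull_comb3 us vs vs (a := 1 - mu) (b := mu) (c := 0).
  rewrite !mul0r !addr0; apply => //; lra.
- move=> Pz; have := hull_lin Pz hm.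
  have -> : dot m z = dot m a + (mu - l) * dot m d.
    by rewrite /z ha /dot /d /vsub /=; ring.
  lra.
- have -> : cr e (vsub z a) = (mu - l) * cr e d by rewrite zE /cr /=; ring.
  rewrite -mulrA id_binet (dotC e n) (dotC d n) dn mulr0 subr0 (dotC d m).
  nra.
Qed.

Lemma half (s t : seq pt) a b na ua va la nb ub vb lb ma mb :
  a != b -> polyhull t a -> polyhull t b ->
  edata s a na ua va la -> edata s b nb ub vb lb ->
  (forall w, w \in t -> dot ma w <= dot ma a) ->
  (forall w, w \in t -> dot mb w <= dot mb b) ->
  cr na ma != 0 -> cr nb mb != 0 -> 0 < cr na ma * cr nb mb ->
  dot na (vsub b a) < 0 -> dot nb (vsub a b) < 0 ->
  connected (polyhull s `\` polyhull t) -> False.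
Proof.
move=> ab Ta Tb Da Db hma hmb ca cb cab dna dnb conn.
have [za [Pza Qza hza]] := near_point Da hma ca dna.
have [zb [Pzb Qzb hzb]] := near_point Db hmb cb dnb.
set h := fun y => cr (vsub b a) (vsub y a).
have hE : forall y z, h z = h y + (- (vsub b a).2) * (z.1 - y.1) + (vsub b a).1 * (z.2 - y.2).
  by move=> y z; rewrite /h /cr /vsub /=; ring.
have hzb' : h zb = - cr (vsub a b) (vsub zb b) by rewrite /h /cr /vsub /=; ring.
have e0 : vsub b a != (0, 0) by apply: vsub_nz; rewrite eq_sym.
have dee := dot_pos e0.
have [[_ _ _ _ sa] _] := Da.
have [[_ _ _ _ sb] _] := Db.
have hnz : forall y, (polyhull s `\` polyhull t) y -> h y != 0.
  move=> y [Py Qy]; apply/eqP => hy; apply: Qy.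
  set e := vsub b a in e0 dee hy.
  set tt := dot e (vsub y a) / dot e e.
  have y1 : y.1 = (1 - tt) * a.1 + tt * b.1.
    have : dot e e * (vsub y a).1 = dot e (vsub y a) * e.1 - cr e (vsub y a) * e.2.
      by rewrite /dot /cr /vsub; ring.
    rewrite -/(h y) hy mul0r subr0 /tt /e /vsub /= => E.
    apply: (mulfI (lt0r_neq0 dee)); rewrite -/e.
    have -> : dot e e * ((1 - dot e (y.1 - a.1, y.2 - a.2) / dot e e) * a.1 +
      dot e (y.1 - a.1, y.2 - a.2) / dot e e * b.1) =
      dot e e * a.1 + dot e (y.1 - a.1, y.2 - a.2) * (b.1 - a.1).
      by field; rewrite lt0r_neq0.
    by rewrite /e /= in E *; lra.
  have y2 : y.2 = (1 - tt) * a.2 + tt * b.2.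
    have : dot e e * (vsub y a).2 = dot e (vsub y a) * e.2 + cr e (vsub y a) * e.1.
      by rewrite /dot /cr /vsub; ring.
    rewrite -/(h y) hy mul0r addr0 /tt /e /vsub /= => E.
    apply: (mulfI (lt0r_neq0 dee)); rewrite -/e.
    have -> : dot e e * ((1 - dot e (y.1 - a.1, y.2 - a.2) / dot e e) * a.2 +
      dot e (y.1 - a.1, y.2 - a.2) / dot e e * b.2) =
      dot e e * a.2 + dot e (y.1 - a.1, y.2 - a.2) * (b.2 - a.2).
      by field; rewrite lt0r_neq0.
    by rewrite /e /= in E *; lra.
  have h1 : dot na y <= dot na a := hull_lin Py sa.
  have h2 : dot nb y <= dot nb b := hull_lin Py sb.
  have t0 : 0 <= tt.
    have : dot na y - dot na a = tt * dot na e by rewrite /dot y1 y2 /e /vsub /=; ring.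
    move=> E; rewrite leNgt; apply/negP => tn.
    nra.
  have t1 : tt <= 1.
    have : dot nb y - dot nb b = (1 - tt) * dot nb (vsub a b) by rewrite /dot y1 y2 /vsub /=; ring.
    move=> E; rewrite leNgt; apply/negP => tn.
    nra.
  rewrite [y]surjective_pairing y1 y2; apply: hull_conv => //.
  by rewrite t0 t1.
have Xa := ca; have Xb := cb.
case: (ltgtP (h za) 0) => hs.
- apply: (conn_split (h := fun y => - h y) (a1 := (vsub b a).2) (a2 := - (vsub b a).1)
    (p1 := za) (p2 := zb) _ conn) => //.
  + by move=> y z; rewrite (hE y z); ring.
  + by move=> y Hy; rewrite oppr_eq0 hnz.
  + by rewrite oppr_gt0.
  + rewrite oppr_lt0 hzb'; rewrite /h in hs; nra.
- apply: (conn_split (h := h) (p1 := za) (p2 := zb) hE conn) => //.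
  rewrite hzb'; rewrite /h in hs; nra.
- by move: (hnz za (conj Pza Qza)); rewrite hs eqxx.
Qed.
Lemma dot_vsub (n a b : pt) : dot n (vsub b a) = dot n b - dot n a.
Proof. rewrite /dot /vsub /=; ring. Qed.

Definition disj (p q : seq pt) := forall v, v \in p -> v \notin q.

Lemma disj_neq (p q : seq pt) v w : disj p q -> v \in p -> w \in q -> v != w.
Proof. by move=> d vp wq; apply/negP => /eqP e; move: (d v vp); rewrite e wq. Qed.

Lemma trans_one (p q : seq pt) a b na ua va la ma mb ub' vb' lb' :
  gpos (p ++ q) -> disj p q -> a != b -> polyhull q a -> polyhull q b ->
  edata p a na ua va la -> edata q b mb ub' vb' lb' ->
  (forall w, w \in q -> dot ma w <= dot ma a) -> cr na ma != 0 ->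
  dot na (vsub b a) = 0 -> dot ma (vsub b a) < 0 /\ dot mb (vsub a b) < 0.
Proof.
move=> gp dj ab Qa Qb [[na0 uap vap uva _] [hua hva _ _]] [[mb0 ubq _ _ smb] [hub _ _ _]] sma c0 d0.
have e0 : vsub b a != (0, 0) by apply: vsub_nz; rewrite eq_sym.
have e0' : vsub a b != (0, 0) by apply: vsub_nz.
split.
- rewrite lt_def; apply/andP; split.
    apply/eqP => /esym h; apply/negP: c0; apply/negPn/eqP; exact: perp2 e0 d0 h.
  by rewrite dot_vsub subr_le0 (hull_lin Qb sma).
- rewrite lt_def; apply/andP; split; last by rewrite dot_vsub subr_le0 (hull_lin Qa smb).
  apply/eqP => /esym h.
  have d0' : dot na (vsub a b) = 0 by move: d0; rewrite !dot_vsub; lra.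
  have c1 := perp2 e0' d0' h.
  have z0 : dot mb (vsub ub' b) = 0 by rewrite dot_vsub hub subrr.
  have := par_zero mb0 c1 z0; rewrite dot_vsub => e1.
  have e2 : dot na ub' = dot na a by move: d0; rewrite dot_vsub; lra.
  apply: (gp ua va ub'); rewrite ?mem_cat ?uap ?vap ?ubq ?orbT //.
  + exact: disj_neq dj vap ubq.
  + exact: disj_neq dj uap ubq.
  + by apply: line_col na0 _ _; rewrite ?hua ?hva ?e2.
Qed.

Lemma pair_false (p q : seq pt) a b na ua va la ma ua' va' la'
   nb ub vb lb mb ub' vb' lb' :
  gpos (p ++ q) -> disj p q -> a != b -> polyhull p a -> polyhull p b ->
  polyhull q a -> polyhull q b ->
  edata p a na ua va la -> edata q a ma ua' va' la' ->
  edata p b nb ub vb lb -> edata q b mb ub' vb' lb' ->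
  cr na ma != 0 -> cr nb mb != 0 -> 0 < cr na ma * cr nb mb ->
  connected (polyhull p `\` polyhull q) -> connected (polyhull q `\` polyhull p) -> False.
Proof.
move=> gp dj ab Pa Pb Qa Qb DPa DQa DPb DQb ca cb cab cPQ cQP.
have [[_ _ _ _ sna] _] := DPa.
have [[_ _ _ _ snb] _] := DPb.
have [[_ _ _ _ sma] _] := DQa.
have [[_ _ _ _ smb] _] := DQb.
have d1 : dot na (vsub b a) <= 0 by rewrite dot_vsub subr_le0 (hull_lin Pb sna).
have d2 : dot nb (vsub a b) <= 0 by rewrite dot_vsub subr_le0 (hull_lin Pa snb).
have ca' : cr ma na != 0 by rewrite crNC oppr_eq0.
have cb' : cr mb nb != 0 by rewrite crNC oppr_eq0.
have cab' : 0 < cr ma na * cr mb nb by rewrite (crNC na ma) (crNC nb mb) mulrNN.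
have QP : dot ma (vsub b a) < 0 -> dot mb (vsub a b) < 0 -> False.
  move=> h1 h2.
  exact: (half ab Pa Pb DQa DQb sna snb ca' cb' cab' h1 h2 cQP).
case: (ltgtP (dot na (vsub b a)) 0) => h1; last first.
- have [] := trans_one gp dj ab Qa Qb DPa DQb sma ca h1.
  exact: QP.
- by move: d1; rewrite leNgt h1.
case: (ltgtP (dot nb (vsub a b)) 0) => h2; last first.
- have ba : b != a by rewrite eq_sym.
  have [] := trans_one gp dj ba Qb Qa DPb DQa smb cb h2.
  by move=> x y; exact: QP.
- by move: d2; rewrite leNgt h2.
exact: (half ab Qa Qb DPa DPb sma smb ca cb cab h1 h2 cPQ).
Qed.

Lemma gpos_l (p q : seq pt) : gpos (p ++ q) -> gpos p.
Proof. by move=> g a b c ha hb hc; apply: g; rewrite mem_cat ?ha ?hb ?hc. Qed.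

Lemma gpos_r (p q : seq pt) : gpos (p ++ q) -> gpos q.
Proof. by move=> g a b c ha hb hc; apply: g; rewrite mem_cat ?ha ?hb ?hc ?orbT. Qed.

Lemma get_data (p q : seq pt) a u0 v0 u1 v1 :
  uniq p -> uniq q -> gpos (p ++ q) -> disj p q ->
  u0 \in p -> v0 \in p -> u0 != v0 -> u1 \in q -> v1 \in q -> u1 != v1 ->
  polyhull p a -> ~ nbhs a (polyhull p) -> polyhull q a -> ~ nbhs a (polyhull q) ->
  exists na ua va la ma ua' va' la',
    [/\ edata p a na ua va la, edata q a ma ua' va' la' & cr na ma != 0].
Proof.
move=> up uq gp dj u0p v0p uv0 u1q v1q uv1 Pa nPa Qa nQa.
have [na [na0 sna]] := support u0p v0p uv0 Pa nPa.
have [ma [ma0 sma]] := support u1q v1q uv1 Qa nQa.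
have F1 := face up (gpos_l gp) na0 Pa sna.
have F2 := face uq (gpos_r gp) ma0 Qa sma.
case: F1 => [ap | [ua [va [la [[uap vap uva hua hva] hl]]]]];
case: F2 => [aq | [ua' [va' [la' [[uaq vaq uva' hua' hva'] hl']]]]].
- by move: (dj a ap); rewrite aq.
- exfalso; apply: (gp a ua' va'); rewrite ?mem_cat ?ap ?uaq ?vaq ?orbT //.
  + exact: disj_neq dj ap uaq.
  + exact: disj_neq dj ap vaq.
  + by apply: line_col ma0 _ _; rewrite ?hua' ?hva'.
- exfalso; apply: (gp ua va a); rewrite ?mem_cat ?uap ?vap ?aq ?orbT //.
  + exact: disj_neq dj vap aq.
  + exact: disj_neq dj uap aq.
  + by apply: line_col na0 _ _; rewrite ?hua ?hva.
- exists na, ua, va, la, ma, ua', va', la'; split.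
  + by case: hl => ? ?; split; split.
  + by case: hl' => ? ?; split; split.
  + apply/eqP => c0.
    have z0 : dot ma (vsub ua' a) = 0 by rewrite dot_vsub hua' subrr.
    have := par_zero ma0 c0 z0; rewrite dot_vsub => e1.
    apply: (gp ua va ua'); rewrite ?mem_cat ?uap ?vap ?uaq ?orbT //.
    * exact: disj_neq dj vap uaq.
    * exact: disj_neq dj uap uaq.
    * by apply: line_col na0 _ _; rewrite ?hua ?hva; lra.
Qed.
Lemma two_elems (s : seq pt) : (2 <= size s)%N -> uniq s ->
  exists u v, [/\ u \in s, v \in s & u != v].
Proof.
move=> hs us; exists (nth (0,0) s 0), (nth (0,0) s 1); split.
- by apply: mem_nth; apply: leq_trans hs.
- exact: mem_nth.
- by rewrite nth_uniq //; apply: leq_trans hs.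
Qed.

Lemma main_geo (p q : seq pt) :
  is_convex_polygon p -> is_convex_polygon q ->
  general_position (p ++ q) -> weakly_disjoint p q ->
  forall x y z : pt,
    (boundary (polyhull p) `&` boundary (polyhull q)) x ->
    (boundary (polyhull p) `&` boundary (polyhull q)) y ->
    (boundary (polyhull p) `&` boundary (polyhull q)) z ->
    x = y \/ y = z \/ x = z.
Proof.
move=> [sp [up _]] [sq [uq _]] gp [cPQ [cQP dj]] x y z Bx By Bz.
have gp' : gpos (p ++ q) by exact: gp.
have [u0 [v0 [u0p v0p uv0]]] := two_elems sp up.
have [u1 [v1 [u1q v1q uv1]]] := two_elems sq uq.
have pN : p != [::] by case: (p) u0p.
have qN : q != [::] by case: (q) u1q.
have clP := closed_hull pN.
have clQ := closed_hull qN.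
have GD : forall w, (boundary (polyhull p) `&` boundary (polyhull q)) w ->
  [/\ polyhull p w, polyhull q w &
  exists na ua va la ma ua' va' la',
    [/\ edata p w na ua va la, edata q w ma ua' va' la' & cr na ma != 0]].
  move=> w [[cP iP] [cQ iQ]].
  have Pw : polyhull p w by apply: clP.
  have Qw : polyhull q w by apply: clQ.
  split => //.
  exact: (get_data up uq gp' dj u0p v0p uv0 u1q v1q uv1 Pw iP Qw iQ).
have [Px Qx [nx [ux [vx [lx [mx [ux' [vx' [lx' [DPx DQx cx]]]]]]]]]] := GD x Bx.
have [Py Qy [ny [uy [vy [ly [my [uy' [vy' [ly' [DPy DQy cy]]]]]]]]]] := GD y By.
have [Pz Qz [nz [uz [vz [lz [mz [uz' [vz' [lz' [DPz DQz cz]]]]]]]]]] := GD z Bz.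
case: (eqVneq x y) => [->|xy]; first by left.
case: (eqVneq y z) => [->|yz]; first by right; left.
case: (eqVneq x z) => [->|xz]; first by right; right.
exfalso.
case: (ltP 0 (cr nx mx * cr ny my)) => h1.
  exact: (pair_false gp' dj xy Px Py Qx Qy DPx DQx DPy DQy cx cy h1 cPQ cQP).
case: (ltP 0 (cr ny my * cr nz mz)) => h2.
  exact: (pair_false gp' dj yz Py Pz Qy Qz DPy DQy DPz DQz cy cz h2 cPQ cQP).
have h3 : 0 < cr nx mx * cr nz mz.
  have a1 : cr nx mx * cr ny my < 0 by rewrite lt_def h1 andbT eq_sym mulf_neq0.
  have a2 : cr ny my * cr nz mz < 0 by rewrite lt_def h2 andbT eq_sym mulf_neq0.
  have : 0 < (cr nx mx * cr ny my) * (cr ny my * cr nz mz) by nra.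
  have -> : (cr nx mx * cr ny my) * (cr ny my * cr nz mz) =
    (cr nx mx * cr nz mz) * (cr ny my ^+ 2) by ring.
  rewrite pmulr_lgt0 // exprn_even_gt0 //.
exact: (pair_false gp' dj xz Px Pz Qx Qz DPx DQx DPz DQz cx cz h3 cPQ cQP).
Qed.

End Geo.

Local Close Scope ring_scope.
Unset Implicit Arguments.

Theorem lemma2 (R : realType) (p q : seq (R * R)) :
  is_convex_polygon p -> is_convex_polygon q ->
  general_position (p ++ q) -> weakly_disjoint p q ->
  forall x y z : R * R,
    (boundary (polyhull p) `&` boundary (polyhull q)) x ->
    (boundary (polyhull p) `&` boundary (polyhull q)) y ->
    (boundary (polyhull p) `&` boundary (polyhull q)) z ->
    x = y \/ y = z \/ x = z.
Proof. exact: main_geo. Qed.
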